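(* Let $V\in C^\infty(\mathbb{R})$ be real-valued, let $D=\frac{d}{dx}$, let $L=D^2+V(x)$, and let $N\ge 0$ be an integer. The following are equivalent: (i) there exists a linear differential operator $Q=D^{2N+1}+\sum_{j=0}^{2N} q_j(x)D^j$ with $q_j\in C^\infty(\mathbb{R})$ such that $[Q,L]=0$; (ii) there exist functions $a_0,\dots,a_N,b_0,\dots,b_N\in C^\infty(\mathbb{R})$ with $a_N\equiv 1$, and a function $r(x,\varepsilon)$, such that for every real $\varepsilon$ the first-order operator $$\hat Q_\varepsilon=\Big(\sum_{j=0}^N a_j(x)\varepsilon^j\Big)D+\sum_{j=0}^N b_j(x)\varepsilon^j$$ is a Lie symmetry of the equation $(L+\varepsilon)\psi=0$, i.e. $[L+\varepsilon,\hat Q_\varepsilon]=r(x,\varepsilon)\,(L+\varepsilon)$ as differential operators.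
   Context: Sign convention: the paper writes its Hamiltonian as $H=-\frac{d^2}{dx^2}+V$, but its determining equations and recursion operators match the operator $L=\frac{d^2}{dx^2}+V$ (equivalently $H=-\frac{d^2}{dx^2}-V$); the statement is given in that consistent convention. A differential operator $\hat Q$ is a (Lie) symmetry of $A\psi=0$ if $[A,\hat Q]=PA$ for some differential operator $P$; for first-order $\hat Q$ and second-order $A=L+\varepsilon$, $P$ is multiplication by a function $r$. *)

(* Defs.v *)
From Stdlib Require Import Reals.
From Coquelicot Require Import Coquelicot.
Open Scope R_scope.

Definition smooth (f : R -> R) : Prop :=
  forall (n : nat) (x : R), ex_derive_n f n x.

Definition opL (V : R -> R) (psi : R -> R) : R -> R :=
  fun x => Derive_n psi 2 x + V x * psi x.

Definition opLeps (V : R -> R) (eps : R) (psi : R -> R) : R -> R :=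
  fun x => opL V psi x + eps * psi x.

Definition opQ (N : nat) (q : nat -> R -> R) (psi : R -> R) : R -> R :=
  fun x => Derive_n psi (2 * N + 1) x
           + sum_f_R0 (fun j => q j x * Derive_n psi j x) (2 * N).

Definition polyeps (N : nat) (c : nat -> R -> R) (eps : R) (x : R) : R :=
  sum_f_R0 (fun j => c j x * eps ^ j) N.

Definition opQhat (N : nat) (a b : nat -> R -> R) (eps : R)
  (psi : R -> R) : R -> R :=
  fun x => polyeps N a eps x * Derive psi x + polyeps N b eps x * psi x.

(* Main.v *)
Require Import Defs.
From Stdlib Require Import Reals Lra Lia FunctionalExtensionality.
From Coquelicot Require Import Coquelicot.
Open Scope R_scope.


Lemma exd_plus (f g : R -> R) x : ex_derive f x -> ex_derive g x ->
  ex_derive (fun y => f y + g y) x.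
Proof. intros; apply (ex_derive_plus f g); auto. Qed.

Lemma Dplus (f g : R -> R) x : ex_derive f x -> ex_derive g x ->
  Derive (fun y => f y + g y) x = Derive f x + Derive g x.
Proof. intros; apply Derive_plus; auto. Qed.

Lemma exdn_S (h : R -> R) n x : (forall y, ex_derive h y) ->
  (forall y, ex_derive_n (Derive h) n y) -> ex_derive_n h (S n) x.
Proof.
  intros H1 H2. destruct n as [|m]. simpl. apply H1.
  simpl. apply ex_derive_ext with (f := Derive_n (Derive h) m).
  - intro t. change (Derive_n (Derive h) m t = Derive_n h (S m) t).
    transitivity (Derive_n h (m+1) t). rewrite <- Derive_n_comp.
    apply Derive_n_ext. reflexivity. replace (m+1)%nat with (S m) by lia. reflexivity.
  - apply (H2 x).
Qed.

Lemma smooth_intro (h : R -> R) : (forall y, ex_derive h y) -> smooth (Derive h) -> smooth h.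
Proof. intros H1 H2 n x. destruct n. simpl; auto. apply exdn_S; auto. Qed.

Lemma smooth_exd f x : smooth f -> ex_derive f x.
Proof. intro H. exact (H 1%nat x). Qed.

Lemma smooth_Derive f : smooth f -> smooth (Derive f).
Proof.
  intros H n x. destruct n. simpl; auto.
  simpl. apply ex_derive_ext with (f := Derive_n f (S n)).
  - intro t. change (Derive_n f (S n) t = Derive_n (Derive f) n t).
    transitivity (Derive_n f (n+1) t). replace (n+1)%nat with (S n) by lia. reflexivity.
    rewrite <- Derive_n_comp. apply Derive_n_ext. reflexivity.
  - exact (H (S (S n)) x).
Qed.

Lemma smooth_ext f g : (forall x, f x = g x) -> smooth f -> smooth g.
Proof. intros H. replace g with f. auto. apply functional_extensionality; auto. Qed.

Lemma smooth_plus f g : smooth f -> smooth g -> smooth (fun x => f x + g x).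
Proof.
  intros Hf Hg n. revert f g Hf Hg. induction n; intros f g Hf Hg x. simpl; auto.
  apply exdn_S. intro y; apply exd_plus; apply smooth_exd; auto.
  intro y. apply ex_derive_n_ext with (f := fun t => Derive f t + Derive g t).
  intro t. rewrite Dplus; auto; apply smooth_exd; auto.
  apply IHn; apply smooth_Derive; auto.
Qed.

Lemma smooth_mult f g : smooth f -> smooth g -> smooth (fun x => f x * g x).
Proof.
  intros Hf Hg n.
  assert (forall n, forall f g, smooth f -> smooth g -> forall k, (k <= n)%nat ->
     forall x, ex_derive_n (fun x => f x * g x) k x) as H.
  { clear. induction n; intros f g Hf Hg k Hk x.
    - replace k with 0%nat by lia. simpl; auto.
    - destruct k. simpl; auto. apply exdn_S.
      intro y; apply ex_derive_mult; apply smooth_exd; auto.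
      intro y. apply ex_derive_n_ext with (f := fun t => Derive f t * g t + f t * Derive g t).
      intro t. rewrite Derive_mult; auto; apply smooth_exd; auto.
      apply ex_derive_n_plus; apply filter_forall; intros z j Hj;
      apply IHn; try lia; auto; apply smooth_Derive; auto. }
  intro x. eapply H; eauto.
Qed.

Lemma smooth_const c : smooth (fun _ => c).
Proof. intros n x. destruct n. simpl; auto.
  apply exdn_S. intro; apply ex_derive_const.
  intro y. apply ex_derive_n_ext with (f := fun _ => 0).
  intro t. rewrite Derive_const. auto.
  revert y. induction n; intro y. simpl; auto. apply exdn_S. intro; apply ex_derive_const.
  intro z. apply ex_derive_n_ext with (f := fun _ => 0). intro t. rewrite Derive_const; auto. auto.
Qed.

Lemma smooth_scal c f : smooth f -> smooth (fun x => c * f x).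
Proof. intro; apply (smooth_mult (fun _ => c)); auto; apply smooth_const. Qed.

Lemma smooth_Derive_n f k : smooth f -> smooth (Derive_n f k).
Proof.
  intro H. induction k. apply (smooth_ext f); auto.
  apply (smooth_ext (Derive (Derive_n f k))). intro; reflexivity. apply smooth_Derive; auto.
Qed.

Lemma smooth_sum (F : nat -> R -> R) n : (forall j, (j <= n)%nat -> smooth (F j)) ->
  smooth (fun x => sum_f_R0 (fun j => F j x) n).
Proof.
  induction n; intro H. simpl. apply (smooth_ext (F 0%nat)); auto.
  simpl. apply smooth_plus. apply IHn; auto. apply H; auto.
Qed.

Lemma exd_sum (F : nat -> R -> R) n x : (forall j, (j <= n)%nat -> ex_derive (F j) x) ->
  ex_derive (fun y => sum_f_R0 (fun j => F j y) n) x.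
Proof.
  induction n; intro H. simpl. apply H; auto.
  simpl. apply exd_plus; auto.
Qed.

Lemma Derive_sum (F : nat -> R -> R) n x : (forall j, (j <= n)%nat -> ex_derive (F j) x) ->
  Derive (fun y => sum_f_R0 (fun j => F j y) n) x = sum_f_R0 (fun j => Derive (F j) x) n.
Proof.
  induction n; intro H. simpl. reflexivity.
  simpl. rewrite Dplus. rewrite IHn; auto. apply exd_sum; auto. apply H; auto.
Qed.


Definition app (M : nat) (c : nat -> R -> R) (psi : R -> R) (x : R) : R :=
  sum_f_R0 (fun k => c k x * Derive_n psi k x) M.

Definition smoothc (c : nat -> R -> R) := forall k, smooth (c k).

Definition trunc (M : nat) (c : nat -> R -> R) : nat -> R -> R :=
  fun k x => if Nat.leb k M then c k x else 0.

Definition dcoef (M : nat) (c : nat -> R -> R) : nat -> R -> R :=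
  fun k x => (if Nat.leb k M then Derive (c k) x else 0) +
    match k with O => 0 | S k' => if Nat.leb k' M then c k' x else 0 end.

Lemma smooth_if (b : bool) f : smooth f -> smooth (fun x => if b then f x else 0).
Proof. intro; destruct b. apply (smooth_ext f); auto. apply smooth_const. Qed.

Lemma smoothc_trunc M c : smoothc c -> smoothc (trunc M c).
Proof. intros H k. apply smooth_if; auto. Qed.

Lemma smoothc_dcoef M c : smoothc c -> smoothc (dcoef M c).
Proof.
  intros H k. unfold dcoef. apply smooth_plus. apply smooth_if. apply smooth_Derive; auto.
  destruct k. apply smooth_const. apply smooth_if; auto.
Qed.

Lemma app_smooth M c psi : smoothc c -> smooth psi -> smooth (app M c psi).
Proof.
  intros Hc Hp. unfold app. apply (smooth_sum (fun k x => c k x * Derive_n psi k x)).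
  intros; apply smooth_mult; auto. apply smooth_Derive_n; auto.
Qed.

Lemma app_S M c psi x : app (S M) c psi x = app M c psi x + c (S M) x * Derive_n psi (S M) x.
Proof. reflexivity. Qed.

Lemma app_trunc M c psi x : app M (trunc M c) psi x = app M c psi x.
Proof. unfold app, trunc. apply sum_eq. intros i Hi.
  replace (Nat.leb i M) with true. auto. symmetry; apply Nat.leb_le; auto. Qed.

Lemma app_ext M c d psi x : (forall k, (k <= M)%nat -> c k x = d k x) -> app M c psi x = app M d psi x.
Proof. intros H. unfold app. apply sum_eq. intros i Hi. rewrite H; auto. Qed.

Lemma app_lift M K c psi x : (M <= K)%nat -> app M c psi x = app K (trunc M c) psi x.
Proof.
  intro H. induction H. symmetry; apply app_trunc.
  rewrite app_S. rewrite <- IHle. unfold trunc.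
  replace (Nat.leb (S m) M) with false. ring. symmetry; apply Nat.leb_gt; lia.
Qed.

Lemma app_plus M c d psi x : app M (fun k y => c k y + d k y) psi x = app M c psi x + app M d psi x.
Proof. unfold app. rewrite <- sum_plus. apply sum_eq. intros; ring. Qed.

Lemma app_minus M c d psi x : app M (fun k y => c k y - d k y) psi x = app M c psi x - app M d psi x.
Proof.
  replace (app M c psi x) with (app M (fun k y => (c k y - d k y) + d k y) psi x).
  rewrite app_plus. ring. apply app_ext. intros; ring.
Qed.

Lemma app_scal M (f : R -> R) c psi x : app M (fun k y => f y * c k y) psi x = f x * app M c psi x.
Proof. unfold app. rewrite scal_sum. apply sum_eq. intros; ring. Qed.

Lemma sum_shift f n : sum_f_R0 (fun k => match k with O => 0 | S k' => f k' end) (S n) = sum_f_R0 f n.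
Proof. induction n. simpl; ring. rewrite tech5. rewrite IHn. reflexivity. Qed.

Lemma sum_shift' (g : nat -> R) f n : (forall k, g (S k) = f k) -> g O = 0 ->
  sum_f_R0 g (S n) = sum_f_R0 f n.
Proof. intros H1 H2. rewrite <- (sum_shift f n). apply sum_eq. intros [|i] _; auto. Qed.

Lemma Derive_app M c psi x : smoothc c -> smooth psi ->
  Derive (app M c psi) x = app (S M) (dcoef M c) psi x.
Proof.
  intros Hc Hp. unfold app at 1.
  rewrite (Derive_sum (fun k y => c k y * Derive_n psi k y)).
  2:{ intros; apply ex_derive_mult; apply smooth_exd; auto. apply smooth_Derive_n; auto. }
  unfold dcoef.
  transitivity (app (S M) (fun k y => (if Nat.leb k M then Derive (c k) y else 0)) psi x +
                app (S M) (fun k y => match k with O => 0 | S k' => if Nat.leb k' M then c k' y else 0 end) psi x).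
  2:{ rewrite <- app_plus. reflexivity. }
  rewrite app_S. replace (Nat.leb (S M) M) with false by (symmetry; apply Nat.leb_gt; lia).
  unfold app. rewrite (sum_shift' _ (fun k => (if Nat.leb k M then c k x else 0) * Derive_n psi (S k) x) M); [| intro; reflexivity | simpl; ring].
  transitivity (sum_f_R0 (fun k => Derive (c k) x * Derive_n psi k x) M +
     sum_f_R0 (fun k => c k x * Derive_n psi (S k) x) M).
  - rewrite <- sum_plus. apply sum_eq. intros i Hi.
    rewrite Derive_mult. reflexivity. apply smooth_exd; auto.
    apply smooth_exd. apply smooth_Derive_n; auto.
  - f_equal. rewrite ?Rmult_0_l, ?Rplus_0_r. apply sum_eq. intros i Hi.
    replace (Nat.leb i M) with true. auto. symmetry; apply Nat.leb_le; auto.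
    apply sum_eq. intros i Hi.
    replace (Nat.leb i M) with true. auto. symmetry; apply Nat.leb_le; auto.
Qed.

Fixpoint fallR (n k : nat) : R := match k with O => 1 | S k' => fallR n k' * INR (n - k') end.

Lemma Derive_n_pow a n k t :
  Derive_n (fun y => (y - a) ^ n) k t = fallR n k * (t - a) ^ (n - k).
Proof.
  revert t. induction k; intro t. simpl. rewrite Nat.sub_0_r. ring.
  simpl. rewrite (Derive_ext _ (fun y => fallR n k * (y - a) ^ (n - k))) by auto.
  apply is_derive_unique. replace (n - S k)%nat with (Init.Nat.pred (n - k)) by lia.
  auto_derive; auto. unfold Rminus. ring.
Qed.

Lemma smooth_pow a n : smooth (fun y => (y - a) ^ n).
Proof.
  intros k x. destruct k. simpl; auto. simpl.
  apply ex_derive_ext with (f := fun y => fallR n k * (y - a) ^ (n - k)).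
  intro; rewrite Derive_n_pow; auto. auto_derive; auto.
Qed.

Lemma fallR_nz n : fallR n n <> 0.
Proof.
  assert (forall k, (k <= n)%nat -> fallR n k <> 0).
  { induction k; intro H. simpl; lra. simpl. apply Rmult_integral_contrapositive; split.
    apply IHk; lia. apply not_0_INR; lia. }
  apply H; auto.
Qed.

Lemma coef_unique M c x0 : (forall psi, smooth psi -> app M c psi x0 = 0) ->
  forall k, (k <= M)%nat -> c k x0 = 0.
Proof.
  revert c. induction M; intros c H k Hk.
  - replace k with 0%nat by lia. specialize (H (fun _ => 1) (smooth_const 1)).
    unfold app in H. simpl in H. lra.
  - assert (Htop : c (S M) x0 = 0).
    { specialize (H (fun y => (y - x0) ^ (S M)) (smooth_pow x0 (S M))).
      rewrite app_S in H. unfold app in H.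
      rewrite (sum_eq_R0 (fun k => c k x0 * Derive_n (fun y => (y - x0) ^ S M) k x0)) in H.
      rewrite Derive_n_pow in H. rewrite Nat.sub_diag in H. simpl pow in H.
      rewrite Rplus_0_l, Rmult_1_r in H. apply Rmult_integral in H. destruct H; auto.
      exfalso; apply (fallR_nz (S M)); auto.
      intros n Hn. rewrite Derive_n_pow. replace (S M - n)%nat with (S (M - n)) by lia.
      simpl. ring. }
    destruct (Nat.eq_dec k (S M)). subst; auto.
    apply IHM; [|lia]. intros psi Hp. rewrite <- (H psi Hp). rewrite app_S, Htop. ring.
Qed.


Ltac lebs := repeat match goal with
  | |- context [Nat.leb ?a ?b] => destruct (Nat.leb_spec a b); try (exfalso; lia)
  | |- context [Nat.eqb ?a ?b] => destruct (Nat.eqb_spec a b); try (exfalso; lia)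
  end.

Definition T (u w : R -> R) (phi : R -> R) : R -> R :=
  fun x => u x * Derive phi x + w x * phi x.

Definition Tcoef (u w : R -> R) M c : nat -> R -> R :=
  fun k x => u x * dcoef M c k x + w x * trunc M c k x.

Lemma D1 f y : Derive_n f 1 y = Derive f y.
Proof. reflexivity. Qed.
Lemma D2 f y : Derive_n f 2 y = Derive (Derive f) y.
Proof. reflexivity. Qed.

Lemma app_T u w M c psi x : smoothc c -> smooth psi ->
  T u w (app M c psi) x = app (S M) (Tcoef u w M c) psi x.
Proof.
  intros Hc Hp. unfold T. rewrite Derive_app by auto. unfold Tcoef.
  rewrite app_plus, !app_scal. f_equal. f_equal.
  rewrite app_S, app_trunc. unfold trunc. lebs. ring.
Qed.

Lemma smoothc_Tcoef u w M c : smooth u -> smooth w -> smoothc c -> smoothc (Tcoef u w M c).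
Proof. intros Hu Hw Hc k. unfold Tcoef. apply smooth_plus; apply smooth_mult; auto.
  apply smoothc_dcoef; auto. apply smoothc_trunc; auto. Qed.

Definition Lcoef (V : R -> R) M c : nat -> R -> R :=
  fun k x => dcoef (S M) (dcoef M c) k x + V x * trunc M c k x.

Lemma smoothc_Lcoef V M c : smooth V -> smoothc c -> smoothc (Lcoef V M c).
Proof. intros HV Hc k. unfold Lcoef. apply smooth_plus. apply smoothc_dcoef, smoothc_dcoef; auto.
  apply smooth_mult; auto. apply smoothc_trunc; auto. Qed.

Lemma app_L V M c psi x : smooth V -> smoothc c -> smooth psi ->
  opL V (app M c psi) x = app (S (S M)) (Lcoef V M c) psi x.
Proof.
  intros HV Hc Hp. unfold opL. rewrite D2.
  rewrite (Derive_ext (Derive (app M c psi)) (app (S M) (dcoef M c) psi)).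
  2:{ intro; apply Derive_app; auto. }
  rewrite Derive_app by (auto; apply smoothc_dcoef; auto).
  unfold Lcoef. rewrite app_plus, app_scal. f_equal. f_equal.
  rewrite <- app_lift by lia. reflexivity.
Qed.

Fixpoint powL (V : R -> R) (j : nat) (psi : R -> R) : R -> R :=
  match j with O => psi | S j' => opL V (powL V j' psi) end.

Fixpoint lcoefs (V : R -> R) (j : nat) : nat -> R -> R :=
  match j with
  | O => fun k _ => if Nat.eqb k 0 then 1 else 0
  | S j' => Lcoef V (2 * j') (lcoefs V j')
  end.

Lemma smoothc_lcoefs V j : smooth V -> smoothc (lcoefs V j).
Proof. intro HV. induction j; simpl. intro k. destruct (Nat.eqb k 0); apply smooth_const.
  apply smoothc_Lcoef; auto. Qed.

Lemma powL_app V j psi x : smooth V -> smooth psi -> powL V j psi x = app (2 * j) (lcoefs V j) psi x.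
Proof.
  intros HV Hp. revert x. induction j; intro x.
  - unfold app; simpl. ring.
  - simpl powL. replace (powL V j psi) with (app (2*j) (lcoefs V j) psi)
      by (apply functional_extensionality; intro; rewrite IHj; auto).
    rewrite app_L; auto. 2: apply smoothc_lcoefs; auto.
    replace (2 * S j)%nat with (S (S (2*j))) by lia. reflexivity.
Qed.

Lemma powL_smooth V j psi : smooth V -> smooth psi -> smooth (powL V j psi).
Proof. intros HV Hp. apply (smooth_ext (app (2*j) (lcoefs V j) psi)).
  intro; rewrite powL_app; auto. apply app_smooth; auto. apply smoothc_lcoefs; auto. Qed.

Lemma lcoefs_top V j x : lcoefs V j (2 * j) x = 1.
Proof.
  induction j. simpl. reflexivity.
  replace (2 * S j)%nat with (S (S (2*j))) by lia. simpl lcoefs.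
  unfold Lcoef, dcoef, trunc. lebs. replace (j + (j + 0))%nat with (2*j)%nat by lia. rewrite IHj. ring.
Qed.
Lemma powL_comm V j psi : powL V j (opL V psi) = opL V (powL V j psi).
Proof. induction j; simpl; auto. rewrite IHj. auto. Qed.

Definition lam V j x := dcoef (2 * j) (lcoefs V j) (2 * j) x.

Lemma smooth_lam V j : smooth V -> smooth (lam V j).
Proof. intro. unfold lam. apply smoothc_dcoef, smoothc_lcoefs; auto. Qed.

Lemma Tcoef_top u w M c x : Tcoef u w M c (S M) x = u x * c M x.
Proof. unfold Tcoef, dcoef, trunc. lebs. ring. Qed.

Lemma Tcoef_next u w M c x : Tcoef u w M c M x = u x * dcoef M c M x + w x * c M x.
Proof. unfold Tcoef, trunc. lebs. ring. Qed.

Definition SumT V J (U W : nat -> R -> R) psi x :=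
  sum_f_R0 (fun j => T (U j) (W j) (powL V j psi) x) J.

Fixpoint SC V J (U W : nat -> R -> R) : nat -> R -> R :=
  match J with
  | O => Tcoef (U O) (W O) 0 (lcoefs V 0)
  | S J' => fun k x => trunc (S (2 * J')) (SC V J' U W) k x +
                       Tcoef (U (S J')) (W (S J')) (2 * S J') (lcoefs V (S J')) k x
  end.

Lemma T_powL u w V j psi x : smooth V -> smooth psi ->
  T u w (powL V j psi) x = app (S (2 * j)) (Tcoef u w (2 * j) (lcoefs V j)) psi x.
Proof.
  intros HV Hp. replace (powL V j psi) with (app (2*j) (lcoefs V j) psi)
      by (apply functional_extensionality; intro; rewrite powL_app; auto).
  apply app_T; auto. apply smoothc_lcoefs; auto.
Qed.

Lemma SumT_app V J U W psi x : smooth V -> smooth psi ->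
  SumT V J U W psi x = app (S (2 * J)) (SC V J U W) psi x.
Proof.
  intros HV Hp. induction J.
  - change (SumT V 0 U W psi x) with (T (U 0%nat) (W 0%nat) (powL V 0 psi) x). rewrite T_powL; auto.
  - unfold SumT. rewrite tech5. fold (SumT V J U W psi x). rewrite IHJ.
    rewrite T_powL; auto. simpl SC. rewrite app_plus. f_equal.
    apply app_lift. lia.
Qed.

Lemma SC_S V J U W k x : SC V (S J) U W k x = trunc (S (2 * J)) (SC V J U W) k x +
   Tcoef (U (S J)) (W (S J)) (2 * S J) (lcoefs V (S J)) k x.
Proof. reflexivity. Qed.

Lemma SC_top V J U W x : SC V J U W (S (2 * J)) x = U J x.
Proof.
  destruct J.
  - simpl SC. rewrite Tcoef_top. simpl lcoefs. simpl. ring.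
  - rewrite SC_S. unfold trunc. lebs. rewrite Tcoef_top, lcoefs_top. ring.
Qed.

Lemma SC_next V J U W x : SC V J U W (2 * J) x = U J x * lam V J x + W J x.
Proof.
  destruct J.
  - simpl SC. rewrite Tcoef_next. unfold lam. simpl. ring.
  - rewrite SC_S. unfold trunc. lebs. rewrite Tcoef_next, lcoefs_top. unfold lam. ring.
Qed.

Lemma SumT_unique V J U W : smooth V ->
  (forall psi, smooth psi -> forall x, SumT V J U W psi x = 0) ->
  forall j, (j <= J)%nat -> forall x, U j x = 0 /\ W j x = 0.
Proof.
  intro HV. induction J; intros H j Hj x.
  - assert (Hc : forall k, (k <= S (2 * 0))%nat -> SC V 0 U W k x = 0).
    { apply coef_unique. intros psi Hp. rewrite <- SumT_app; auto. }
    replace j with 0%nat by lia.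
    pose proof (Hc 1%nat ltac:(lia)) as H1. pose proof (Hc 0%nat ltac:(lia)) as H0.
    rewrite (SC_top V 0) in H1. rewrite (SC_next V 0) in H0. rewrite H1 in H0. split; lra.
  - assert (Htop : forall y, U (S J) y = 0 /\ W (S J) y = 0).
    { intro y. assert (Hc : forall k, (k <= S (2 * S J))%nat -> SC V (S J) U W k y = 0).
      { apply coef_unique. intros psi Hp. rewrite <- SumT_app; auto. }
      pose proof (Hc _ (le_n _)) as H1. pose proof (Hc (2 * S J)%nat ltac:(lia)) as H0.
      rewrite SC_top in H1. rewrite SC_next in H0. rewrite H1 in H0. split; lra. }
    destruct (Nat.eq_dec j (S J)). subst; auto.
    apply IHJ; [|lia]. intros psi Hp y. rewrite <- (H psi Hp y). unfold SumT.
    rewrite tech5. unfold T. destruct (Htop y) as [A B]. rewrite A, B. ring.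
Qed.



Lemma division V J : smooth V -> forall c, smoothc c ->
  exists U W : nat -> R -> R, (forall j, smooth (U j) /\ smooth (W j)) /\
    (forall x, U J x = c (S (2 * J)) x) /\
    forall psi, smooth psi -> forall x, app (S (2 * J)) c psi x = SumT V J U W psi x.
Proof.
  intro HV. induction J; intros c Hc.
  - exists (fun _ => c 1%nat), (fun _ => c 0%nat). split; [intro; split; auto|]. split; [auto|].
    intros psi Hp x. unfold SumT, app, T. simpl. change (Derive (fun x0 : R => psi x0) x) with (Derive psi x). ring.
  - set (u := c (S (2 * S J))).
    set (w := fun x => c (2 * S J)%nat x - u x * lam V (S J) x).
    set (c' := fun k x => c k x - Tcoef u w (2 * S J) (lcoefs V (S J)) k x).
    assert (Hu : smooth u) by apply Hc.
    assert (Hw : smooth w).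
    { unfold w. apply (smooth_plus _ (fun x => - (u x * lam V (S J) x))). apply Hc.
      apply (smooth_ext (fun x => (-1) * (u x * lam V (S J) x))). intro; ring.
      apply smooth_scal, smooth_mult; auto. apply smooth_lam; auto. }
    assert (Hc' : smoothc c').
    { intro k. unfold c'. apply (smooth_plus _ (fun x => - Tcoef u w (2 * S J) (lcoefs V (S J)) k x)).
      apply Hc. apply (smooth_ext (fun x => (-1) * Tcoef u w (2 * S J) (lcoefs V (S J)) k x)). intro; ring.
      apply smooth_scal. apply smoothc_Tcoef; auto. apply smoothc_lcoefs; auto. }
    destruct (IHJ c' Hc') as [U' [W' [HUW [_ Happ]]]].
    exists (fun j => if Nat.eqb j (S J) then u else U' j), (fun j => if Nat.eqb j (S J) then w else W' j).
    split; [|split].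
    + intro j. destruct (Nat.eqb j (S J)); auto.
    + intro x. rewrite Nat.eqb_refl. reflexivity.
    + intros psi Hp x. unfold SumT. rewrite tech5. rewrite Nat.eqb_refl.
      rewrite T_powL; auto.
      transitivity (app (S (2 * J)) c' psi x + app (S (2 * S J)) (Tcoef u w (2 * S J) (lcoefs V (S J))) psi x).
      * rewrite (app_lift (S (2*J)) (S (2 * S J))) by lia. rewrite <- app_plus.
        apply app_ext. intros k Hk. unfold trunc, c'. lebs.
        ring.
        assert (k = S (2 * S J) \/ k = (2 * S J)%nat) as [-> | ->] by lia.
        rewrite Tcoef_top, lcoefs_top. unfold u. ring.
        rewrite Tcoef_next, lcoefs_top. unfold w, lam. ring.
      * f_equal. rewrite Happ; auto. unfold SumT. apply sum_eq. intros i Hi. lebs. reflexivity.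
Qed.


Ltac eta := repeat match goal with |- context [Derive (fun t => ?f t)] =>
  change (Derive (fun t => f t)) with (Derive f) end.

Lemma comm_T P u w phi x : smooth P -> smooth u -> smooth w -> smooth phi ->
  opL P (T u w phi) x - T u w (opL P phi) x =
  T (fun y => Derive (Derive u) y + 2 * Derive w y)
    (fun y => Derive (Derive w) y - u y * Derive P y - 2 * Derive u y * P y) phi x
  + 2 * Derive u x * opL P phi x.
Proof.
  intros HP Hu Hw Hf.
  assert (E : forall f y, smooth f -> ex_derive f y) by (intros; apply smooth_exd; auto).
  assert (H1 : forall y, Derive (T u w phi) y =
     Derive u y * Derive phi y + u y * Derive (Derive phi) y + (Derive w y * phi y + w y * Derive phi y)).
  { intro y. apply is_derive_unique. unfold T. auto_derive.
    repeat split; apply E; auto using smooth_Derive. eta; ring. }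
  assert (H2 : Derive (Derive (T u w phi)) x =
     Derive (Derive u) x * Derive phi x + Derive u x * Derive (Derive phi) x
     + (Derive u x * Derive (Derive phi) x + u x * Derive (Derive (Derive phi)) x)
     + (Derive (Derive w) x * phi x + Derive w x * Derive phi x
     + (Derive w x * Derive phi x + w x * Derive (Derive phi) x))).
  { rewrite (Derive_ext _ _ x H1). apply is_derive_unique. auto_derive.
    repeat split; apply E; auto using smooth_Derive. eta; ring. }
  assert (H3 : Derive (opL P phi) x = Derive (Derive (Derive phi)) x + (Derive P x * phi x + P x * Derive phi x)).
  { unfold opL. apply is_derive_unique.
    apply (is_derive_ext (fun y => Derive (Derive phi) y + P y * phi y)). intro; reflexivity.
    auto_derive. repeat split; apply E; auto using smooth_Derive. eta; ring. }
  unfold opL at 1. rewrite D2, H2. unfold T at 2. rewrite H3. unfold T, opL. rewrite !D2. ring.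
Qed.

Lemma opL_sum V (F : nat -> R -> R) J x : smooth V -> (forall j, (j <= J)%nat -> smooth (F j)) ->
  opL V (fun y => sum_f_R0 (fun j => F j y) J) x = sum_f_R0 (fun j => opL V (F j) x) J.
Proof.
  intros HV HF. unfold opL. rewrite D2.
  rewrite (Derive_ext _ (fun y => sum_f_R0 (fun j => Derive (F j) y) J)).
  2:{ intro; apply Derive_sum. intros; apply smooth_exd; auto. }
  rewrite Derive_sum. 2:{ intros; apply smooth_exd, smooth_Derive; auto. }
  rewrite scal_sum, <- sum_plus. apply sum_eq. intros. rewrite D2. eta. ring.
Qed.

Definition Uh (U W : nat -> R -> R) j y := Derive (Derive (U j)) y + 2 * Derive (W j) y.
Definition Wh (V : R -> R) (U W : nat -> R -> R) j y :=
  Derive (Derive (W j)) y - U j y * Derive V y - 2 * Derive (U j) y * V y +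
  match j with O => 0 | S i => 2 * Derive (U i) y end.

Lemma T_ext u w u' w' phi x : u x = u' x -> w x = w' x -> T u w phi x = T u' w' phi x.
Proof. intros A B; unfold T; rewrite A, B; auto. Qed.

Lemma comm_SumT V J U W psi x : smooth V -> (forall j, (j <= J)%nat -> smooth (U j)) -> (forall j, (j <= J)%nat -> smooth (W j)) ->
  smooth psi ->
  opL V (SumT V J U W psi) x - SumT V J U W (opL V psi) x =
  SumT V J (Uh U W) (Wh V U W) psi x + 2 * Derive (U J) x * powL V (S J) psi x.
Proof.
  intros HV HU HW Hp. unfold SumT at 1. rewrite opL_sum; auto.
  2:{ intros j Hj. unfold T. apply smooth_plus; apply smooth_mult; auto.
      apply smooth_Derive, powL_smooth; auto. apply powL_smooth; auto. }
  unfold SumT. rewrite <- minus_sum.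
  rewrite (sum_eq _ (fun j => T (Uh U W j)
     (fun y => Derive (Derive (W j)) y - U j y * Derive V y - 2 * Derive (U j) y * V y) (powL V j psi) x
     + 2 * Derive (U j) x * powL V (S j) psi x)).
  2:{ intros i Hi. rewrite powL_comm. rewrite comm_T; auto. apply powL_smooth; auto. }
  rewrite sum_plus.
  rewrite (sum_eq (fun j => T (Uh U W j) (Wh V U W j) (powL V j psi) x)
     (fun j => T (Uh U W j)
     (fun y => Derive (Derive (W j)) y - U j y * Derive V y - 2 * Derive (U j) y * V y) (powL V j psi) x
     + (match j with O => 0 | S i => 2 * Derive (U i) x * powL V j psi x end))).
  2:{ intros i _. unfold T, Wh. destruct i; ring. }
  rewrite sum_plus. rewrite Rplus_assoc. f_equal.
  rewrite <- (sum_shift (fun j => 2 * Derive (U j) x * powL V (S j) psi x)).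
  rewrite tech5. f_equal. apply sum_eq. intros [|i] _; reflexivity.
Qed.


Lemma cont_zero f : continuous f 0 -> (forall e, e <> 0 -> f e = 0) -> f 0 = 0.
Proof.
  intros Hc H. destruct (Req_dec (f 0) 0) as [|Hn]; auto. exfalso.
  assert (Hp : 0 < Rabs (f 0)) by (apply Rabs_pos_lt; auto).
  pose proof (proj1 (filterlim_locally f (f 0)) Hc (mkposreal _ Hp)) as Hl.
  destruct Hl as [d Hd].
  assert (Hb : ball 0 d (d / 2)).
  { pose proof (cond_pos d). apply (Rabs_lt_between' (d/2) 0 d). unfold minus, plus, opp. simpl. lra. }
  specialize (Hd _ Hb). rewrite H in Hd. 2:{ pose proof (cond_pos d); lra. }
  unfold ball in Hd; simpl in Hd. unfold AbsRing_ball, abs, minus, plus, opp in Hd; simpl in Hd.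
  rewrite Rplus_0_l, Rabs_Ropp in Hd. lra.
Qed.

Lemma smooth_monom j : smooth (fun y => y ^ j).
Proof. apply (smooth_ext (fun y => (y - 0) ^ j)). intro; f_equal; ring. apply smooth_pow. Qed.

Lemma poly_zero M : forall d : nat -> R, (forall e, sum_f_R0 (fun j => d j * e ^ j) M = 0) ->
  forall j, (j <= M)%nat -> d j = 0.
Proof.
  induction M; intros d H j Hj.
  - replace j with 0%nat by lia. specialize (H 1). simpl in H. lra.
  - assert (Hs : forall e, sum_f_R0 (fun j => d j * e ^ j) (S M) =
                 d 0%nat + e * sum_f_R0 (fun j => d (S j) * e ^ j) M).
    { intro e. rewrite decomp_sum by lia. simpl Init.Nat.pred. rewrite scal_sum. simpl. f_equal. ring.
      apply sum_eq. intros; simpl; ring. }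
    assert (H0 : d 0%nat = 0). { specialize (H 0). rewrite Hs in H. lra. }
    assert (Hne : forall e, e <> 0 -> sum_f_R0 (fun j => d (S j) * e ^ j) M = 0).
    { intros e He. specialize (H e). rewrite Hs, H0, Rplus_0_l in H.
      apply Rmult_integral in H. destruct H; auto. lra. }
    assert (Hq : forall e, sum_f_R0 (fun j => d (S j) * e ^ j) M = 0).
    { intro e. destruct (Req_dec e 0) as [->|]; auto.
      apply (cont_zero (fun e => sum_f_R0 (fun j => d (S j) * e ^ j) M)); auto.
      assert (HS : smooth (fun e => sum_f_R0 (fun j => d (S j) * e ^ j) M)).
      { apply (smooth_sum (fun j y => d (S j) * y ^ j)). intros; apply smooth_scal, smooth_monom. }
      exact (ex_derive_continuous _ 0 (smooth_exd _ 0 HS)). }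
    destruct j. auto. apply (IHM (fun j => d (S j))); auto. lia.
Qed.



Ltac smD := repeat match goal with |- smooth (Derive _) => apply smooth_Derive end.

Ltac gpow := repeat match goal with |- context [(-1) ^ ?e] => let s := fresh "s" in set (s := (-1)^e) in * end.

Lemma Dscal_fun s f : Derive (fun x => s * f x) = (fun y => s * Derive f y).
Proof. apply functional_extensionality; intro; apply Derive_scal. Qed.

Definition UU (N : nat) (a : nat -> R -> R) j x := (-1) ^ (N - j) * a j x.
Definition WW N a j x := -/2 * Derive (UU N a j) x.

Definition Res V N (a : nat -> R -> R) := forall j, (j <= N)%nat -> forall x,
  -/2 * Derive (Derive (Derive (a j))) x - a j x * Derive V x - 2 * Derive (a j) x * V x =
  match j with O => 0 | S i => 2 * Derive (a i) x end.

Lemma sgn_S N i : (S i <= N)%nat -> (-1) ^ (N - i) = - (-1) ^ (N - S i).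
Proof. intro. replace (N - i)%nat with (S (N - S i)) by lia. simpl. ring. Qed.

Lemma res_transfer V N U W : (forall j, (j <= N)%nat -> smooth (U j) /\ smooth (W j)) ->
  (forall j, (j <= N)%nat -> forall y, Uh U W j y = 0 /\ Wh V U W j y = 0) -> Res V N (UU N U).
Proof.
  intros HS H j Hj x.
  destruct (HS j Hj) as [HU HW].
  assert (H3 : Derive (Derive (Derive (U j))) x + 2 * Derive (Derive (W j)) x = 0).
  { transitivity (Derive (fun t => Derive (Derive (U j)) t + 2 * Derive (W j) t) x).
    symmetry. rewrite Dplus. rewrite (Derive_scal (Derive (W j)) 2 x). reflexivity.
    apply smooth_exd; smD; auto.
    apply ex_derive_scal. apply smooth_exd; smD; auto.
    rewrite (Derive_ext _ (fun _ => 0)). apply Derive_const. intro t. exact (proj1 (H j Hj t)). }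
  destruct (H j Hj x) as [_ H2]. unfold Wh in H2. unfold UU. rewrite !Dscal_fun.
  assert (K : -/2 * Derive (Derive (Derive (U j))) x - U j x * Derive V x - 2 * Derive (U j) x * V x
     = - match j with O => 0 | S i => 2 * Derive (U i) x end) by lra.
  transitivity ((-1) ^ (N - j) * (-/2 * Derive (Derive (Derive (U j))) x - U j x * Derive V x - 2 * Derive (U j) x * V x)).
  ring. rewrite K.
  destruct j as [|i].
  - ring.
  - rewrite Dscal_fun. rewrite (sgn_S N i Hj). ring.
Qed.

Lemma res_back V N a : Res V N a ->
  forall j, (j <= N)%nat -> forall y, Uh (UU N a) (WW N a) j y = 0 /\ Wh V (UU N a) (WW N a) j y = 0.
Proof.
  intros H j Hj y. unfold Uh, Wh, WW, UU. rewrite !Dscal_fun. split. field.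
  pose proof (H j Hj y) as Hr.
  transitivity ((-1) ^ (N - j) * (-/2 * Derive (Derive (Derive (a j))) y - a j y * Derive V y - 2 * Derive (a j) y * V y) + match j with
    | 0%nat => 0 | S i => 2 * ((-1) ^ (N - i) * Derive (a i) y) end).
  destruct j; rewrite ?Dscal_fun; gpow; ring. rewrite Hr.
  destruct j as [|i]. ring. rewrite (sgn_S N i Hj). ring.
Qed.



Lemma opQ_app N q c phi x : (forall x, c (S (2*N)) x = 1) ->
  (forall k x, (k <= 2*N)%nat -> c k x = q k x) -> opQ N q phi x = app (S (2*N)) c phi x.
Proof.
  intros H1 H2. unfold opQ. rewrite app_S, H1. unfold app.
  rewrite (sum_eq (fun k => c k x * Derive_n phi k x) (fun j => q j x * Derive_n phi j x))
    by (intros; rewrite H2; auto).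
  replace (2*N+1)%nat with (S (2*N)) by lia. ring.
Qed.

Lemma smoothc_SC V J U W : smooth V -> (forall j, (j <= J)%nat -> smooth (U j) /\ smooth (W j)) ->
  smoothc (SC V J U W).
Proof.
  intro HV. induction J; intro H.
  - destruct (H 0%nat (le_n _)) as [H0 H1].
    exact (smoothc_Tcoef _ _ _ _ H0 H1 (smoothc_lcoefs V 0 HV)).
  - intro k. apply (smooth_ext (fun x => trunc (S (2 * J)) (SC V J U W) k x +
      Tcoef (U (S J)) (W (S J)) (2 * S J) (lcoefs V (S J)) k x)). intro; symmetry; apply SC_S.
    destruct (H (S J) (le_n _)) as [H0 H1].
    apply (smooth_plus (trunc (S (2 * J)) (SC V J U W) k) (Tcoef (U (S J)) (W (S J)) (2 * S J) (lcoefs V (S J)) k)).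
    apply smoothc_trunc. apply IHJ. intros; apply H; lia.
    exact (smoothc_Tcoef _ _ _ _ H0 H1 (smoothc_lcoefs V (S J) HV) k).
Qed.

Lemma smooth_polyeps N c e : (forall j, (j <= N)%nat -> smooth (c j)) -> smooth (polyeps N c e).
Proof. intro H. unfold polyeps. apply (smooth_sum (fun j y => c j y * e ^ j)).
  intros j Hj. apply (smooth_mult (c j) (fun _ => e ^ j)). apply H; exact Hj. apply smooth_const. Qed.

Lemma Derive_polyeps N c e x : (forall j, (j <= N)%nat -> smooth (c j)) ->
  Derive (polyeps N c e) x = polyeps N (fun j => Derive (c j)) e x.
Proof.
  intro H. unfold polyeps. rewrite (Derive_sum (fun j y => c j y * e ^ j) N x).
  apply sum_eq. intros i Hi. rewrite (Derive_ext _ (fun y => e ^ i * c i y)) by (intro; apply Rmult_comm).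
  rewrite (Derive_scal (c i) (e ^ i) x). apply Rmult_comm.
  intros j Hj. apply (ex_derive_mult (c j) (fun _ => e ^ j)). apply (smooth_exd (c j) x). apply H; exact Hj. auto_derive; auto.
Qed.

Lemma sum_lin (F G H : nat -> R) p q N :
  sum_f_R0 F N - sum_f_R0 G N * p - 2 * sum_f_R0 H N * q =
  sum_f_R0 (fun j => F j - G j * p - 2 * H j * q) N.
Proof. induction N; simpl. ring. rewrite <- IHN. ring. Qed.

Lemma res_sum N (a3 a0 a1 : nat -> R) Vp Vv e :
 (forall j, (j <= N)%nat -> -/2 * a3 j - a0 j * Vp - 2 * a1 j * Vv = match j with O => 0 | S i => 2 * a1 i end) ->
 a1 N = 0 ->
 -/2 * sum_f_R0 (fun j => a3 j * e ^ j) N - sum_f_R0 (fun j => a0 j * e ^ j) N * Vp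
   - 2 * sum_f_R0 (fun j => a1 j * e ^ j) N * (Vv + e) = 0.
Proof.
  intros H HN. rewrite scal_sum. rewrite sum_lin.
  rewrite (sum_eq _ (fun j => (match j with O => 0 | S i => 2 * a1 i end) * e ^ j - 2 * a1 j * e ^ (S j))).
  2:{ intros i Hi. rewrite <- (H i Hi). simpl. ring. }
  rewrite minus_sum. destruct N as [|n].
  - simpl. rewrite HN. ring.
  - rewrite (sum_shift' _ (fun i => 2 * a1 i * e ^ (S i)) n); [| intro; reflexivity | simpl; ring].
    rewrite tech5. rewrite HN. ring.
Qed.

Lemma poly_res N (a3 a0 a1 : nat -> R) Vp Vv :
 (forall e, -/2 * sum_f_R0 (fun j => a3 j * e ^ j) N - sum_f_R0 (fun j => a0 j * e ^ j) N * Vp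
   - 2 * sum_f_R0 (fun j => a1 j * e ^ j) N * (Vv + e) = 0) ->
 forall j, (j <= N)%nat -> -/2 * a3 j - a0 j * Vp - 2 * a1 j * Vv = match j with O => 0 | S i => 2 * a1 i end.
Proof.
  intros H.
  set (d := fun j => (if Nat.leb j N then -/2 * a3 j - a0 j * Vp - 2 * a1 j * Vv else 0)
                     - match j with O => 0 | S i => 2 * a1 i end).
  assert (Hd : forall e, sum_f_R0 (fun j => d j * e ^ j) (S N) = 0).
  { intro e. rewrite <- (H e). unfold d.
    rewrite (sum_eq _ (fun j => (if Nat.leb j N then -/2 * a3 j - a0 j * Vp - 2 * a1 j * Vv else 0) * e ^ j
       - (match j with O => 0 | S i => 2 * a1 i end) * e ^ j)) by (intros; ring).
    rewrite minus_sum.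
    rewrite (sum_shift' (fun j => (match j with O => 0 | S i => 2 * a1 i end) * e ^ j)
               (fun i => 2 * a1 i * e ^ (S i)) N); [| intro; reflexivity | simpl; ring].
    rewrite tech5.
    replace (Nat.leb (S N) N) with false by (symmetry; apply Nat.leb_gt; lia).
    rewrite Rmult_0_l, Rplus_0_r.
    rewrite (sum_eq _ (fun j => -/2 * a3 j * e ^ j - a0 j * e ^ j * Vp - 2 * (a1 j * e ^ j) * Vv)).
    2:{ intros i Hi. replace (Nat.leb i N) with true by (symmetry; apply Nat.leb_le; lia). ring. }
    rewrite <- sum_lin. rewrite (scal_sum (fun j => a3 j * e ^ j) N (-/2)).
    replace (sum_f_R0 (fun i => 2 * a1 i * e ^ S i) N) with (2 * e * sum_f_R0 (fun j => a1 j * e ^ j) N).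
    rewrite (sum_eq (fun j => -/2 * a3 j * e ^ j) (fun i => a3 i * e ^ i * -/2)) by (intros; ring).
    ring.
    rewrite scal_sum. apply sum_eq. intros; simpl; ring. }
  intros j Hj. pose proof (poly_zero (S N) d Hd j ltac:(lia)) as Z. unfold d in Z.
  replace (Nat.leb j N) with true in Z by (symmetry; apply Nat.leb_le; lia). lra.
Qed.



Definition bb (a : nat -> R -> R) j x := -/2 * Derive (a j) x.

Lemma Dbb a j : Derive (bb a j) = fun y => -/2 * Derive (Derive (a j)) y.
Proof. unfold bb. apply Dscal_fun. Qed.

Lemma DPfun N c e : (forall j, (j <= N)%nat -> smooth (c j)) ->
  Derive (polyeps N c e) = polyeps N (fun j => Derive (c j)) e.
Proof. intro H. apply functional_extensionality. intro x. apply Derive_polyeps. exact H. Qed.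

Lemma smD_all N c : (forall j, (j <= N)%nat -> smooth (c j)) ->
  forall j, (j <= N)%nat -> smooth (Derive (c j)).
Proof. intros H j Hj. exact (smooth_Derive _ (H j Hj)). Qed.

Lemma Hop V e : forall phi, opLeps V e phi = opL (fun y => V y + e) phi.
Proof. intro. apply functional_extensionality; intro; unfold opLeps, opL; ring. Qed.

Lemma Hqh N a b e : forall phi, opQhat N a b e phi = T (polyeps N a e) (polyeps N b e) phi.
Proof. intro. reflexivity. Qed.

Lemma DP V e x : smooth V -> Derive (fun y => V y + e) x = Derive V x.
Proof. intro HV. apply is_derive_unique. auto_derive. exact (smooth_exd V x HV). eta. ring. Qed.

Lemma DconstN (f : R -> R) x : (forall y, f y = 1) -> Derive f x = 0.
Proof. intro H. rewrite (Derive_ext f (fun _ => 1) x H). apply Derive_const. Qed.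

Lemma ii_identity V N a e psi x : smooth V -> (forall j, (j <= N)%nat -> smooth (a j)) ->
  Res V N a -> (forall x, a N x = 1) -> smooth psi ->
  opLeps V e (opQhat N a (bb a) e psi) x - opQhat N a (bb a) e (opLeps V e psi) x =
  2 * polyeps N (fun j => Derive (a j)) e x * opLeps V e psi x.
Proof.
  intros HV Ha HR HaN Hp.
  assert (Hb : forall j, (j <= N)%nat -> smooth (bb a j)).
  { intros j Hj. exact (smooth_scal (-/2) (Derive (a j)) (smooth_Derive _ (Ha j Hj))). }
  assert (HP : smooth (fun y => V y + e)) by exact (smooth_plus V (fun _ => e) HV (smooth_const e)).
  pose proof (smooth_polyeps N a e Ha) as HA. pose proof (smooth_polyeps N (bb a) e Hb) as HB.
  rewrite !Hop, !Hqh.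
  rewrite (comm_T (fun y => V y + e) (polyeps N a e) (polyeps N (bb a) e) psi x HP HA HB Hp).
  pose proof (smD_all N a Ha) as Ha1. pose proof (smD_all N _ Ha1) as Ha2.
  pose proof (smD_all N _ Ha2) as Ha3.
  pose proof (smD_all N _ Hb) as Hb1.
  assert (HU0 : Derive (Derive (polyeps N a e)) x + 2 * Derive (polyeps N (bb a) e) x = 0).
  { rewrite (DPfun N a e Ha), (DPfun N _ e Ha1), (DPfun N _ e Hb).
    unfold polyeps. rewrite (scal_sum _ N 2). rewrite <- sum_plus. apply sum_eq_R0.
    intros i Hi. rewrite Dbb. field. }
  assert (HW0 : Derive (Derive (polyeps N (bb a) e)) x - polyeps N a e x * Derive (fun y => V y + e) x
     - 2 * Derive (polyeps N a e) x * (V x + e) = 0).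
  { rewrite (DPfun N _ e Hb), (DPfun N _ e Hb1), (DPfun N a e Ha), (DP V e x HV).
    unfold polyeps.
    rewrite (sum_eq (fun j => Derive (Derive (bb a j)) x * e ^ j)
               (fun j => Derive (Derive (Derive (a j))) x * e ^ j * -/2)).
    2:{ intros i Hi. rewrite Dbb, Dscal_fun. ring. }
    rewrite <- (scal_sum (fun j => Derive (Derive (Derive (a j))) x * e ^ j) N (-/2)).
    exact (res_sum N (fun j => Derive (Derive (Derive (a j))) x) (fun j => a j x) (fun j => Derive (a j) x)
      (Derive V x) (V x) e (fun j Hj => HR j Hj x) (DconstN (a N) x HaN)). }
  unfold T at 1. rewrite HU0, HW0. rewrite (DPfun N a e Ha). ring.
Qed.

Lemma ii_extract V N a b r : smooth V -> (forall j, (j <= N)%nat -> smooth (a j) /\ smooth (b j)) ->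
  (forall (eps : R) (psi : R -> R), smooth psi -> forall x,
     opLeps V eps (opQhat N a b eps psi) x - opQhat N a b eps (opLeps V eps psi) x
     = r x eps * opLeps V eps psi x) ->
  forall e x, Derive (Derive (polyeps N a e)) x + 2 * Derive (polyeps N b e) x = 0 /\
    Derive (Derive (polyeps N b e)) x - polyeps N a e x * Derive V x
      - 2 * Derive (polyeps N a e) x * (V x + e) = 0.
Proof.
  intros HV Hab Hr e x.
  assert (Ha : forall j, (j <= N)%nat -> smooth (a j)) by (intros j Hj; exact (proj1 (Hab j Hj))).
  assert (Hb : forall j, (j <= N)%nat -> smooth (b j)) by (intros j Hj; exact (proj2 (Hab j Hj))).
  assert (HP : smooth (fun y => V y + e)) by exact (smooth_plus V (fun _ => e) HV (smooth_const e)).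
  pose proof (smooth_polyeps N a e Ha) as HA. pose proof (smooth_polyeps N b e Hb) as HB.
  set (A := polyeps N a e) in *. set (B := polyeps N b e) in *. set (P := fun y => V y + e) in *.
  set (Uc := Derive (Derive A) x + 2 * Derive B x).
  set (Wc := Derive (Derive B) x - A x * Derive P x - 2 * Derive A x * P x).
  set (Rc := 2 * Derive A x - r x e).
  assert (EQ : forall psi, smooth psi -> Uc * Derive psi x + Wc * psi x + Rc * opL P psi x = 0).
  { intros psi Hp. pose proof (Hr e psi Hp x) as E. rewrite !Hop, !Hqh in E.
    fold A B P in E.
    rewrite (comm_T P A B psi x HP HA HB Hp) in E. unfold T in E. fold Uc Wc in E.
    unfold Rc. lra. }
  set (cc := fun k (_ : R) => match k with O => Wc + Rc * P x | 1%nat => Uc | _ => Rc end).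
  assert (Hc : forall k, (k <= 2)%nat -> cc k x = 0).
  { apply coef_unique. intros psi Hp. rewrite <- (EQ psi Hp). unfold app, cc, opL.
    simpl sum_f_R0. rewrite D2. eta. ring. }
  pose proof (Hc 0%nat ltac:(lia)) as H0. pose proof (Hc 1%nat ltac:(lia)) as H1.
  pose proof (Hc 2%nat ltac:(lia)) as H2. unfold cc in H0, H1, H2.
  rewrite H2, Rmult_0_l, Rplus_0_r in H0.
  assert (DPx : Derive P x = Derive V x) by exact (DP V e x HV).
  split. exact H1. unfold Wc in H0. rewrite DPx in H0. exact H0.
Qed.

Lemma res_from V N a b : smooth V -> (forall j, (j <= N)%nat -> smooth (a j) /\ smooth (b j)) ->
  (forall e x, Derive (Derive (polyeps N a e)) x + 2 * Derive (polyeps N b e) x = 0 /\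
    Derive (Derive (polyeps N b e)) x - polyeps N a e x * Derive V x
      - 2 * Derive (polyeps N a e) x * (V x + e) = 0) -> Res V N a.
Proof.
  intros HV Hab Hx j Hj x.
  assert (Ha : forall j, (j <= N)%nat -> smooth (a j)) by (intros i Hi; exact (proj1 (Hab i Hi))).
  assert (Hb : forall j, (j <= N)%nat -> smooth (b j)) by (intros i Hi; exact (proj2 (Hab i Hi))).
  pose proof (smD_all N a Ha) as Ha1. pose proof (smD_all N _ Ha1) as Ha2.
  pose proof (smD_all N _ Hb) as Hb1.
  assert (H3 : forall e, Derive (Derive (Derive (polyeps N a e))) x + 2 * Derive (Derive (polyeps N b e)) x = 0).
  { intro e. pose proof (smooth_polyeps N a e Ha) as HA. pose proof (smooth_polyeps N b e Hb) as HB.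
    transitivity (Derive (fun y => Derive (Derive (polyeps N a e)) y + 2 * Derive (polyeps N b e) y) x).
    symmetry. rewrite Dplus. rewrite (Derive_scal (Derive (polyeps N b e)) 2 x). reflexivity.
    exact (smooth_exd _ x (smooth_Derive _ (smooth_Derive _ HA))).
    exact (ex_derive_scal _ 2 x (smooth_exd _ x (smooth_Derive _ HB))).
    rewrite (Derive_ext _ (fun _ => 0) x (fun t => proj1 (Hx e t))). apply Derive_const. }
  apply (poly_res N (fun j => Derive (Derive (Derive (a j))) x) (fun j => a j x) (fun j => Derive (a j) x)
     (Derive V x) (V x)); [|exact Hj].
  intro e. pose proof (H3 e) as E1. pose proof (proj2 (Hx e x)) as E2.
  rewrite (DPfun N a e Ha), (DPfun N _ e Ha1), (DPfun N _ e Ha2) in E1.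
  rewrite (DPfun N b e Hb), (DPfun N _ e Hb1) in E1.
  rewrite (DPfun N b e Hb), (DPfun N _ e Hb1), (DPfun N a e Ha) in E2.
  unfold polyeps in *. cbv beta in *. lra.
Qed.


Theorem lemma1 (V : R -> R) (N : nat) :
  smooth V ->
  ((exists q : nat -> R -> R,
      (forall j, (j <= 2 * N)%nat -> smooth (q j)) /\
      (forall psi : R -> R, smooth psi ->
         forall x, opQ N q (opL V psi) x - opL V (opQ N q psi) x = 0))
   <->
   (exists a b : nat -> R -> R,
      (forall j, (j <= N)%nat -> smooth (a j) /\ smooth (b j)) /\
      (forall x, a N x = 1) /\
      exists r : R -> R -> R,
        forall (eps : R) (psi : R -> R), smooth psi ->
          forall x,
            opLeps V eps (opQhat N a b eps psi) x
            - opQhat N a b eps (opLeps V eps psi) x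
            = r x eps * opLeps V eps psi x)).
Proof.
  intro HV.
  assert (HLs : forall psi, smooth psi -> smooth (opL V psi)) by
    (intros psi Hp; exact (powL_smooth V 1 psi HV Hp)).
  split.
  - intros [q [Hq Hc]].
    set (c := fun k x => if Nat.eqb k (S (2*N)) then 1 else if Nat.leb k (2*N) then q k x else 0).
    assert (Hcs : smoothc c).
    { intro k. unfold c. destruct (Nat.eqb_spec k (S (2*N))).
      apply (smooth_ext (fun _ => 1)); [intro; reflexivity | apply smooth_const].
      destruct (Nat.leb_spec k (2*N)).
      apply (smooth_ext (q k)); [intro; reflexivity | apply Hq; lia].
      apply (smooth_ext (fun _ => 0)); [intro; reflexivity | apply smooth_const]. }
    assert (HQ : forall phi x, opQ N q phi x = app (S (2*N)) c phi x).
    { intros phi x. apply opQ_app.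
      intro; unfold c; rewrite Nat.eqb_refl; reflexivity.
      intros k y Hk. unfold c. destruct (Nat.eqb_spec k (S (2*N))). lia.
      destruct (Nat.leb_spec k (2*N)). reflexivity. lia. }
    destruct (division V N HV c Hcs) as [U [W [HUW [HUN Hdiv]]]].
    assert (HU1 : forall x, U N x = 1) by (intro; rewrite HUN; unfold c; rewrite Nat.eqb_refl; reflexivity).
    assert (HQS : forall psi, smooth psi -> opQ N q psi = SumT V N U W psi).
    { intros psi Hp. apply functional_extensionality; intro y. rewrite HQ. exact (Hdiv psi Hp y). }
    assert (Hz : forall psi, smooth psi -> forall x, SumT V N (Uh U W) (Wh V U W) psi x = 0).
    { intros psi Hp x.
      pose proof (comm_SumT V N U W psi x HV (fun j _ => proj1 (HUW j)) (fun j _ => proj2 (HUW j)) Hp) as E.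
      rewrite (DconstN (U N) x HU1) in E. rewrite <- (HQS psi Hp) in E.
      rewrite <- (HQS _ (HLs psi Hp)) in E.
      pose proof (Hc psi Hp x). lra. }
    assert (HR : Res V N (UU N U)).
    { apply (res_transfer V N U W). intros j _; exact (HUW j). exact (SumT_unique V N _ _ HV Hz). }
    assert (HaS : forall j, (j <= N)%nat -> smooth (UU N U j)).
    { intros j _. exact (smooth_scal _ (U j) (proj1 (HUW j))). }
    assert (HaN : forall x, UU N U N x = 1).
    { intro x. unfold UU. rewrite Nat.sub_diag, HU1. simpl; ring. }
    exists (UU N U), (bb (UU N U)). split; [|split].
    + intros j Hj. split. exact (HaS j Hj).
      exact (smooth_scal (-/2) _ (smooth_Derive _ (HaS j Hj))).
    + exact HaN.
    + exists (fun x e => 2 * polyeps N (fun j => Derive (UU N U j)) e x). intros e psi Hp x.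
      exact (ii_identity V N (UU N U) e psi x HV HaS HR HaN Hp).
  - intros [a [b [Hab [HaN [r Hr]]]]].
    pose proof (ii_extract V N a b r HV Hab Hr) as Hx.
    pose proof (res_from V N a b HV Hab Hx) as HR.
    pose proof (res_back V N a HR) as HB.
    assert (HUW : forall j, (j <= N)%nat -> smooth (UU N a j) /\ smooth (WW N a j)).
    { intros j Hj. assert (H1 : smooth (UU N a j)) by exact (smooth_scal _ (a j) (proj1 (Hab j Hj))).
      split. exact H1. exact (smooth_scal (-/2) _ (smooth_Derive _ H1)). }
    exists (SC V N (UU N a) (WW N a)). split.
    + intros j _. exact (smoothc_SC V N _ _ HV HUW j).
    + intros psi Hp x.
      assert (HQ : forall phi, smooth phi -> opQ N (SC V N (UU N a) (WW N a)) phi = SumT V N (UU N a) (WW N a) phi).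
      { intros phi Hphi. apply functional_extensionality; intro y.
        rewrite (opQ_app N (SC V N (UU N a) (WW N a)) (SC V N (UU N a) (WW N a)) phi y).
        symmetry; exact (SumT_app V N _ _ phi y HV Hphi).
        intro z. rewrite SC_top. unfold UU. rewrite Nat.sub_diag, HaN. simpl; ring.
        intros; reflexivity. }
      rewrite (HQ _ (HLs psi Hp)), (HQ psi Hp).
      pose proof (comm_SumT V N (UU N a) (WW N a) psi x HV (fun j Hj => proj1 (HUW j Hj))
        (fun j Hj => proj2 (HUW j Hj)) Hp) as E.
      assert (Z1 : SumT V N (Uh (UU N a) (WW N a)) (Wh V (UU N a) (WW N a)) psi x = 0).
      { unfold SumT. apply sum_eq_R0. intros j Hj. unfold T. destruct (HB j Hj x) as [h1 h2].
        rewrite h1, h2. ring. }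
      assert (Z2 : Derive (UU N a N) x = 0).
      { apply DconstN. intro. unfold UU. rewrite Nat.sub_diag, HaN. simpl; ring. }
      rewrite Z1, Z2 in E. lra.
Qed.
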